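(* Let $k \geq 1$ be an integer. There exist complex matrices $W_{(v)}, W_{(w)}$ of size $(4k+1) \times (2k+2)$, with columns indexed by $0,\ldots,2k+1$, such that, writing $W := [W_{(v)}, W_{(w)}]$ for the $(4k+1)\times(4k+4)$ block matrix and $c^{(v)}_i, c^{(w)}_i$ for the $i$-th columns of $W_{(v)}, W_{(w)}$: (i) $c^{(v)}_i \perp c^{(v)}_j$ whenever $j - i \not\equiv 0, 1, 2k+1 \pmod{2k+2}$; (ii) $c^{(w)}_i \perp c^{(w)}_j$ whenever $j - i \not\equiv 0, 1, 2k+1 \pmod{2k+2}$; (iii) $c^{(v)}_i \perp c^{(w)}_j$ whenever $i \neq j$; (iv) every $(4k+1)\times(4k+1)$ submatrix of $W$ (formed by any $4k+1$ columns) is nonsingular.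
   Context: Orthogonality is with respect to the standard inner product on $\mathbb{C}^{4k+1}$. *)

(* Defs.v *)
From HB Require Import structures.
From mathcomp Require Import all_boot all_order all_algebra all_field.
Set Implicit Arguments. Unset Strict Implicit. Unset Printing Implicit Defensive.
Import Order.TTheory GRing.Theory Num.Theory.
Local Open Scope ring_scope.

(* Complex numbers are modelled by algC (algebraically closed, with conjugation). *)

Definition cdot (m : nat) (u v : 'cV[algC]_m) : algC :=
  \sum_(r < m) (u r 0)^* * v r 0.

Definition corth (m : nat) (u v : 'cV[algC]_m) : Prop := cdot u v = 0.

(* (j - i) mod n, computed in nat for i, j < n *)
Definition dmod (n i j : nat) : nat := ((j + n - i) %% n)%N.

(* Main.v *)
Require Import Defs.
From HB Require Import structures.
From mathcomp Require Import all_boot all_order all_algebra all_field.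
From mathcomp Require Import ring zify.
Import GRing.Theory Num.Theory.
Local Open Scope ring_scope.

Module L3.
Import Order.TTheory.
Lemma geo_sum (N : nat) (z : algC) : z ^+ N = 1 ->
  \sum_(r < N) z ^+ r = if z == 1 then N%:R else 0.
Proof.
move=> hz; case: eqP => [->|/eqP nz1].
  by rewrite (eq_bigr (fun _ => 1)) ?sumr_const ?card_ord // => i _; rewrite expr1n.
have : (z - 1) * \sum_(i < N) z ^+ i = 0 by rewrite -subrX1 hz subrr.
by move/eqP; rewrite mulf_eq0 subr_eq0 (negbTE nz1) /= => /eqP.
Qed.

Lemma seq_max {s : seq algC} {F : algC -> algC} : s != [::] ->
  (forall x, F x \is Num.real) -> exists2 y, y \in s & forall z, z \in s -> F z <= F y.
Proof.
move=> + hR; elim: s => [//|x s IH] _.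
have [->|ns] := eqVneq s [::].
  by exists x; rewrite ?mem_head // => z; rewrite inE => /eqP->.
have [y ys hy] := IH ns.
have /orP[hxy|hyx] := real_leVge (hR x) (hR y).
  exists y; first by rewrite inE ys orbT.
  by move=> z; rewrite inE => /orP[/eqP->//|/hy].
exists x; first by rewrite mem_head.
by move=> z; rewrite inE => /orP[/eqP->//|/hy hz]; apply: le_trans hyx.
Qed.

Lemma coset_contra {eta w : algC} : `|eta| = 1 -> `|w| = 1 -> 'Re w < 1 ->
  'Re eta <= 'Re w -> 'Re (eta * w) <= 'Re eta -> 'Re (eta * w^*) <= 'Re eta -> False.
Proof.
move=> ne nw a1 xa h1 h2.
rewrite ReM in h1; rewrite ReM Re_conj Im_conj in h2.
move: (normC2_Re_Im eta) (normC2_Re_Im w); rewrite ne nw expr1n.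
move: (Creal_Re eta) (Creal_Im eta) (Creal_Re w) (Creal_Im w) h1 h2 xa a1.
set x := 'Re eta; set y := 'Im eta; set a := 'Re w; set b := 'Im w.
move=> Rx Ry Ra Rb h1 h2 xa a1 n1 n2.
have a1' : 0 < 1 - a by rewrite subr_gt0.
have x0 : 0 <= x.
  have : 0 <= (x + x) - ((x * a - y * b) + (x * a - y * - b)).
    by rewrite subr_ge0 lerD.
  have -> : (x + x) - ((x * a - y * b) + (x * a - y * - b)) = (2 * (1 - a)) * x by ring.
  by rewrite pmulr_rge0 // mulr_gt0.
have a0 : 0 <= a := le_trans x0 xa.
have hyb : `|y * b| <= x * (1 - a).
  rewrite real_ler_norml ?rpredM //; apply/andP; split.
    rewrite -subr_ge0; have : 0 <= x - (x * a - y * b) by rewrite subr_ge0.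
    by congr (_ <= _); ring.
  rewrite -subr_ge0; have : 0 <= x - (x * a - y * - b) by rewrite subr_ge0.
  by congr (_ <= _); ring.
have hyb2 : (y * b) ^+ 2 <= (x * (1 - a)) ^+ 2.
  rewrite -real_normK ?rpredM // ler_sqr ?nnegrE //.
  exact: le_trans (normr_ge0 _) hyb.
have hx2 : x ^+ 2 <= a ^+ 2 by rewrite ler_sqr ?nnegrE.
have hb2 : b ^+ 2 <= y ^+ 2.
  have -> : b ^+ 2 = 1 - a ^+ 2 by rewrite n2; ring.
  have -> : y ^+ 2 = 1 - x ^+ 2 by rewrite n1; ring.
  by rewrite lerB.
have b20 : 0 <= b ^+ 2 by rewrite real_exprn_even_ge0.
have c1 : b ^+ 2 * b ^+ 2 <= a ^+ 2 * (1 - a) ^+ 2.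
  apply: le_trans (ler_wpM2r b20 hb2) _.
  rewrite -exprMn; apply: le_trans hyb2 _; rewrite exprMn.
  by apply: ler_wpM2r => //; rewrite exprn_ge0 // ltW.
have eb : b ^+ 2 * b ^+ 2 = (1 + a) ^+ 2 * (1 - a) ^+ 2.
  have -> : b ^+ 2 = 1 - a ^+ 2 by rewrite n2; ring.
  ring.
rewrite eb ler_pM2r ?exprn_gt0 // in c1.
have : 0 < (1 + a) ^+ 2 - a ^+ 2.
  have -> : (1 + a) ^+ 2 - a ^+ 2 = 1 + 2 * a by ring.
  by rewrite ltr_wpDr // mulr_ge0.
by rewrite subr_gt0 => /(le_lt_trans c1); rewrite ltxx.
Qed.

Lemma norm_root1 {N : nat} {z : algC} : (0 < N)%N -> z ^+ N = 1 -> `|z| = 1.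
Proof.
move=> hN hz; apply/eqP; rewrite -(@pexpr_eq1 _ _ N hN) ?normr_ge0 //.
by rewrite -normrX hz normr1.
Qed.

Lemma conj_root1 {N : nat} {z : algC} : (0 < N)%N -> z ^+ N = 1 -> z^* = z^-1.
Proof. by move=> hN hz; rewrite invC_norm (norm_root1 hN hz) expr1n invr1 mul1r. Qed.

Lemma Re_le1 (z : algC) : `|z| = 1 -> 'Re z <= 1.
Proof.
move=> nz; rewrite -nz; apply: le_trans (leif_normC_Re_Creal z).
by rewrite real_ler_norm ?Creal_Re.
Qed.

Lemma Re_eq1 (z : algC) : `|z| = 1 -> 'Re z = 1 -> z = 1.
Proof.
move=> nz rz; apply: eqC_semipolar; rewrite ?normr1 ?nz //.
  by rewrite rz; apply/esym/Creal_ReP; rewrite rpred1.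
by rewrite (Creal_ImP 1 _) ?rpred1 // mulr0.
Qed.

Lemma exists_omega (N : nat) : (2 < N)%N -> exists w : algC, N.-primitive_root w /\
  (forall z, z ^+ N = 1 -> z != 1 -> z != w -> z != w^-1 -> 'Re z < 'Re w).
Proof.
move=> hN; have hN0 : (0 < N)%N by apply: leq_trans hN.
have [xi hxi] := C_prim_root_exists hN0.
have xiN : xi ^+ N = 1 := prim_expr_order hxi.
pose s := [seq xi ^+ i | i <- iota 1 N.-1].
have ns : s != [::] by rewrite -size_eq0 size_map size_iota -lt0n -subn1 subn_gt0 ltnW.
have [w0 w0s hmax] := seq_max ns (@Creal_Re _).
have {}hmax : forall z, z ^+ N = 1 -> z != 1 -> 'Re z <= 'Re w0.
  move=> z zN z1; apply: hmax; have [i zi] := prim_rootP hxi zN.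
  rewrite zi /s; apply: map_f; rewrite mem_iota add1n prednK //=.
  rewrite ltn_ord andbT lt0n; apply: contra z1 => /eqP i0.
  by rewrite zi i0 expr0.
move: w0s; rewrite /s => /mapP[i0]; rewrite mem_iota add1n prednK // => /andP[i0p i0N] ew0.
have w0N : w0 ^+ N = 1 by rewrite ew0 exprAC xiN expr1n.
have nw0 : `|w0| = 1 := norm_root1 hN0 w0N.
have w01 : w0 != 1.
  rewrite ew0 -(expr0 xi) (eq_prim_root_expr hxi) mod0n modn_small //.
  by rewrite -lt0n.
have Rw1 : 'Re w0 < 1.
  rewrite lt_def Re_le1 // andbT; apply: contra w01 => /eqP h.
  by apply/eqP; apply: Re_eq1.
have [j xij] : exists j : nat, xi = w0 ^+ j.
  case: (boolP [exists j : 'I_N, xi == w0 ^+ j]).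
    by move=> /existsP[j /eqP ->]; exists j.
  move=> /existsPn hno; exfalso.
  have hno' : forall j : nat, xi != w0 ^+ j.
    move=> j; rewrite -(expr_mod j w0N).
    exact: (hno (Ordinal (ltn_pmod j hN0))).
  pose c := [seq xi * w0 ^+ j | j <- iota 0 N].
  have nc : c != [::] by rewrite -size_eq0 size_map size_iota -lt0n.
  have incs : forall j, xi * w0 ^+ j \in c.
    move=> j; rewrite -(expr_mod j w0N); apply: map_f.
    by rewrite mem_iota add0n ltn_pmod.
  have [eta] := seq_max nc (@Creal_Re _).
  move=> /mapP[j0 _ ->] hm.
  have etaN : (xi * w0 ^+ j0) ^+ N = 1 by rewrite exprMn xiN exprAC w0N expr1n mul1r.
  have eta1 : xi * w0 ^+ j0 != 1.
    apply: contraNneq (hno' (j0 * N.-1)%N) => h.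
    have e : w0 ^+ (j0 * N.-1) * w0 ^+ j0 = 1.
      by rewrite -exprD -mulnSr prednK // mulnC exprM w0N expr1n.
    by apply/eqP; rewrite -[xi]mulr1 -e mulrA (mulrC xi) -mulrA h mulr1.
  apply: (coset_contra (norm_root1 hN0 etaN) nw0 Rw1 (hmax _ etaN eta1)).
    rewrite -mulrA -exprSr; exact: (hm _ (incs _)).
  rewrite (conj_root1 hN0 w0N) -mulrA.
  have -> : w0 ^+ j0 * w0^-1 = w0 ^+ (j0 + N.-1).
    have w00 : w0 != 0 by rewrite -normr_eq0 nw0 oner_eq0.
    rewrite exprD; congr (_ * _); apply: (mulfI w00).
    by rewrite mulfV // -exprS prednK.
  exact: (hm _ (incs _)).
have w0prim : N.-primitive_root w0.
  rewrite ew0 prim_root_exp_coprime //.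
  have : coprime ((i0 * j) %% N) N.
    have : xi ^+ 1 == xi ^+ (i0 * j) by rewrite expr1 {1}xij ew0 -exprM.
    rewrite (eq_prim_root_expr hxi) => /eqP <-.
    by rewrite modn_small ?coprime1n // ltnW.
  by rewrite coprime_modl coprimeMl => /andP[].
exists w0; split => // z zN z1 zw zwi.
have := hmax z zN z1; rewrite le_eqVlt => /orP[/eqP he|//].
exfalso; have nz := norm_root1 hN0 zN.
have /orP[hi|hi] := real_leVge (rpredM (Creal_Im z) (Creal_Im w0)) (rpred0 _ : 0 \is Num.real).
  move/eqP: zwi; apply; rewrite -(conj_root1 hN0 w0N).
  apply: eqC_semipolar; rewrite ?norm_conjC ?nz ?nw0 // ?Re_conj //.
  by rewrite Im_conj mulrN oppr_ge0.
by move/eqP: zw; apply; apply: eqC_semipolar; rewrite ?nz ?nw0.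
Qed.

Section Params.
Variable N : nat.
Hypothesis hN : (3 < N)%N.
Variable w : algC.
Hypothesis hprim : N.-primitive_root w.
Hypothesis hRe : forall z, z ^+ N = 1 -> z != 1 -> z != w -> z != w^-1 -> 'Re z < 'Re w.

Lemma hN0 : (0 < N)%N. Proof. by apply: leq_trans hN. Qed.
Lemma wN : w ^+ N = 1. Proof. exact: prim_expr_order hprim. Qed.
Lemma nw : `|w| = 1. Proof. exact: norm_root1 hN0 wN. Qed.
Lemma w0 : w != 0. Proof. by rewrite -normr_eq0 nw oner_eq0. Qed.
Lemma w1 : w != 1.
Proof.
by rewrite -{1}(expr1 w) -(expr0 w) (eq_prim_root_expr hprim) mod0n modn_small // ltnW // ltnW.
Qed.
Lemma wm1 : w != -1.
Proof.
apply: contraTneq (w1) => hw; apply/negP => _.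
have : w ^+ 2 == w ^+ 0 by rewrite hw expr0 sqrrN expr1n.
by rewrite (eq_prim_root_expr hprim) mod0n modn_small // ltnW.
Qed.
Lemma wconj : w^* = w^-1. Proof. exact: conj_root1 hN0 wN. Qed.

Definition a := 'Re w.
Lemma Ra : a \is Num.real. Proof. exact: Creal_Re. Qed.
Lemma a_lt1 : a < 1.
Proof.
rewrite lt_def Re_le1 ?nw // andbT; apply: contra w1 => /eqP h.
by apply/eqP; apply: Re_eq1; rewrite ?nw.
Qed.
Lemma a_gtm1 : -1 < a.
Proof.
have : 'Re (- w) < 1.
  rewrite lt_def Re_le1 ?normrN ?nw // andbT; apply: contra wm1 => /eqP h.
  by rewrite -eqr_oppLR; apply/eqP; apply: Re_eq1; rewrite ?normrN ?nw.
by rewrite raddfN /= ltrNl.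
Qed.

Definition u := 1 + a.
Lemma u_gt0 : 0 < u. Proof. by rewrite /u -ltrBlDl sub0r a_gtm1. Qed.
Lemma u_neq0 : u != 0. Proof. by rewrite gt_eqF // u_gt0. Qed.
Definition t := 2 / u.
Lemma Rt : t \is Num.real.
Proof. by rewrite /t rpredM ?rpredV ?ger0_real // ltW ?u_gt0. Qed.
Lemma t_neq0 : t != 0. Proof. by rewrite /t mulf_neq0 ?invr_eq0 ?u_neq0 // pnatr_eq0. Qed.

Definition B : algC := -1 + 'i * t.
Lemma Bc : B^* = -2 - B.
Proof. rewrite /B conjC_rect ?rpredN ?rpred1 ?Rt //; ring. Qed.
Definition s := B * B^*.
Lemma s_eq : s = 1 + t ^+ 2.
Proof.
rewrite /s /B conjC_rect ?rpredN ?rpred1 ?Rt //.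
have -> : (-1 + 'i * t) * (-1 - 'i * t) = 1 - 'i ^+ 2 * t ^+ 2 by ring.
by rewrite sqrCi; ring.
Qed.
Lemma s_gt0 : 0 < s.
Proof. by rewrite s_eq ltr_pwDl ?ltr01 // real_exprn_even_ge0 ?Rt. Qed.
Definition A := s * u.
Definition P (z : algC) := A + B * z + B^* * z^-1.

Lemma A_gt : 2 * `|B| < A.
Proof.
have A0 : 0 <= A by rewrite mulr_ge0 // ltW ?s_gt0 ?u_gt0.
have B0 : 0 <= 2 * `|B| by rewrite mulr_ge0 ?normr_ge0.
have nB : `|B| ^+ 2 = s := normCK B.
have e : A ^+ 2 = (2 * `|B|) ^+ 2 + s * u ^+ 2.
  rewrite [(2 * _) ^+ 2]exprMn nB /A.
  have hu := u_neq0.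
  transitivity (s * (s * u ^+ 2)); first ring.
  by rewrite {2}s_eq /t; field.
have key : (2 * `|B|) ^+ 2 < A ^+ 2.
  by rewrite e ltrDl mulr_gt0 ?s_gt0 // exprn_gt0 // u_gt0.
by move: key; rewrite ltr_sqr ?nnegrE.
Qed.

Lemma P_pos z : `|z| = 1 -> 0 < P z.
Proof.
move=> nz.
have ez : z^-1 = z^* by rewrite invC_norm nz expr1n invr1 mul1r.
have -> : P z = A + 2 * 'Re (B * z).
  by rewrite /P ez ReE rmorphM /=; field.
have h1 : - `|B * z| <= 'Re (B * z).
  have : `|'Re (B * z)| <= `|B * z| := leif_normC_Re_Creal (B * z).
  by rewrite real_ler_norml ?Creal_Re // => /andP[].
rewrite normrM nz mulr1 in h1.
have := A_gt; rewrite -subr_gt0 => h2.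
apply: lt_le_trans h2 _.
by rewrite lerD2l -mulrN ler_pM2l ?ltr0n.
Qed.


Lemma aE : a = (w + w^-1) / 2.
Proof. by rewrite /a ReE wconj. Qed.

Lemma P_geo : P w * P w^-1 = P 1 ^+ 2.
Proof.
have hw := w0.
by rewrite /P /A /s /u aE Bc; field.
Qed.

Lemma P_gap_id z : z != 0 ->
  P z * P z^-1 - P 1 ^+ 2 = 4 * s * ((z + z^-1) / 2 - 1) * ((z + z^-1) / 2 - a).
Proof.
move=> hz; have hw := w0.
rewrite /P /A /s /u aE Bc; field; by rewrite hz hw.
Qed.

Lemma P_gap z : z ^+ N = 1 -> z != 1 -> z != w -> z != w^-1 ->
  P 1 ^+ 2 < P z * P z^-1.
Proof.
move=> zN z1 zw zwi.
have nz := norm_root1 hN0 zN.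
have hz : z != 0 by rewrite -normr_eq0 nz oner_eq0.
rewrite -subr_gt0 P_gap_id //.
have <- : 'Re z = (z + z^-1) / 2 by rewrite ReE (conj_root1 hN0 zN).
have xa := hRe z zN z1 zw zwi; rewrite -/a in xa.
have x1 : 'Re z < 1 := lt_trans xa a_lt1.
rewrite -mulrA; apply: mulr_gt0; first exact: mulr_gt0 _ s_gt0.
have -> : ('Re z - 1) * ('Re z - a) = (1 - 'Re z) * (a - 'Re z) by ring.
by apply: mulr_gt0; rewrite subr_gt0.
Qed.

Lemma w2 : w ^+ 2 != 1.
Proof.
by rewrite -(expr0 w) (eq_prim_root_expr hprim) mod0n modn_small // ltnW.
Qed.

Lemma P_diff : P w != P w^-1.
Proof.
rewrite -subr_eq0.
have -> : P w - P w^-1 = (B - B^*) * (w - w^-1) by rewrite /P invrK; ring.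
rewrite mulf_neq0 //.
  rewrite Bc.
  have -> : B - (-2 - B) = 2 * 'i * t by rewrite /B; ring.
  by rewrite mulf_neq0 ?t_neq0 // mulf_neq0 ?neq0Ci // pnatr_eq0.
rewrite subr_eq0; apply: contra w2 => /eqP h.
by rewrite expr2 {1}h mulVf ?w0.
Qed.

Lemma P1_pos : 0 < P 1. Proof. by rewrite P_pos ?normr1. Qed.
Lemma Pw_pos m : 0 < P (w ^+ m). Proof. by rewrite P_pos // normrX nw expr1n. Qed.
Lemma Pwi_pos m : 0 < P (w ^+ m)^-1. Proof. by rewrite P_pos // normrV ?unitfE ?expf_neq0 ?w0 // normrX nw expr1n invr1. Qed.


Definition p m := P (w ^+ m).
Definition q m := P (w ^+ m)^-1.
Definition al m := sqrtC (p m).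
Definition be m := P 1 / al m.
Definition h m := q m - P 1 ^+ 2 / p m.
Definition ga m := sqrtC (h m).

Lemma p_pos m : 0 < p m. Proof. exact: Pw_pos. Qed.
Lemma al_pos m : 0 < al m. Proof. by rewrite sqrtC_gt0 p_pos. Qed.
Lemma al_neq0 m : al m != 0. Proof. by rewrite gt_eqF ?al_pos. Qed.
Lemma al_conj m : (al m)^* = al m. Proof. by rewrite geC0_conj // ltW ?al_pos. Qed.
Lemma al_sq m : al m ^+ 2 = p m. Proof. exact: sqrtCK. Qed.
Lemma be_pos m : 0 < be m. Proof. by rewrite divr_gt0 ?P1_pos ?al_pos. Qed.
Lemma be_conj m : (be m)^* = be m. Proof. by rewrite geC0_conj // ltW ?be_pos. Qed.
Lemma albe m : al m * be m = P 1. Proof. by rewrite /be mulrC divfK ?al_neq0. Qed.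
Lemma be_sq m : be m ^+ 2 = P 1 ^+ 2 / p m. Proof. by rewrite /be expr_div_n al_sq. Qed.

Definition mid m := (1 < m)%N && (m < N.-1)%N.

Lemma wpow_inv m : w ^+ m != 0. Proof. by rewrite expf_neq0 ?w0. Qed.

Lemma h0 m : (m < N)%N -> ~~ mid m -> h m = 0.
Proof.
move=> mN; rewrite /mid negb_and -!leqNgt => /orP[m1|mN1].
  have P10 : P 1 != 0 by rewrite gt_eqF ?P1_pos.
  case: m m1 {mN} => [|[|//]] _; rewrite /h /q /p.
    by rewrite expr0 invr1 expr2 mulrK ?unitfE // subrr.
  have Pw0 : P w != 0 by rewrite gt_eqF // -(expr1 w) Pw_pos.
  rewrite expr1 -P_geo; apply/eqP; rewrite subr_eq0; apply/eqP.
  by rewrite mulrAC mulfV // mul1r.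
have -> : m = N.-1 by move: mN mN1 hN; clear; lia.
have ew : w ^+ N.-1 = w^-1.
  apply: (mulfI w0); rewrite -exprS prednK ?hN0 // wN mulfV ?w0 //.
have Pw0 : P w^-1 != 0 by rewrite gt_eqF // -(expr1 w) Pwi_pos.
rewrite /h /q /p ew invrK -P_geo; apply/eqP; rewrite subr_eq0; apply/eqP.
by rewrite mulfK.
Qed.

Lemma wroot m : (w ^+ m) ^+ N = 1. Proof. by rewrite exprAC wN expr1n. Qed.

Lemma h_pos m : (m < N)%N -> mid m -> 0 < h m.
Proof.
move=> mN /andP[m1 mN1].
have e1 : (w ^+ m == w ^+ 1) = false.
  by rewrite (eq_prim_root_expr hprim) !modn_small // ?(ltnW m1) ?gtn_eqF // (leq_trans _ hN).
have z1 : w ^+ m != 1.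
  by rewrite -(expr0 w) (eq_prim_root_expr hprim) mod0n modn_small // -lt0n (ltnW m1).
have zw : w ^+ m != w by rewrite -{2}(expr1 w) e1.
have zwi : w ^+ m != w^-1.
  apply: contraTneq mN1 => e; rewrite -leqNgt.
  have : w ^+ m.+1 == w ^+ 0 by rewrite exprS e mulfV ?w0 ?expr0.
  rewrite (eq_prim_root_expr hprim) mod0n => /eqP hm.
  have : m.+1 = N.
    case: (ltngtP m.+1 N) hm => [lt|gt|->] //; first by rewrite modn_small.
    by move: gt; rewrite ltnS leqNgt mN.
  by move: hN; clear; lia.
have := @P_gap _ (wroot m) z1 zw zwi.
rewrite -subr_gt0 /h /q /p => hg.
have -> : P (w ^+ m)^-1 - P 1 ^+ 2 / P (w ^+ m) = (P (w ^+ m) * P (w ^+ m)^-1 - P 1 ^+ 2) / P (w ^+ m).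
  by field; rewrite gt_eqF ?Pw_pos.
by rewrite divr_gt0 ?Pw_pos.
Qed.

Lemma ga_sq m : (m < N)%N -> ga m ^+ 2 = h m /\ (ga m)^* = ga m.
Proof.
move=> mN; case: (boolP (mid m)) => hm.
  split; first exact: sqrtCK.
  by rewrite geC0_conj // sqrtC_ge0 ltW ?h_pos.
by rewrite /ga h0 // sqrtC0 expr0n conjC0.
Qed.


Lemma sum3 (K n : nat) (H : nat -> algC) : K = n.+3 -> H 0%N = 0 -> H 1%N = 0 ->
  H n.+2 = 0 -> \sum_(r < K) H r = \sum_(m < n) H m.+2.
Proof.
move=> -> H0 H1 H2; rewrite big_ord_recl big_ord_recl big_ord_recr /=.
by rewrite H0 H1 H2 !add0r addr0.
Qed.

Lemma sum_p z : \sum_(r < N) p r * z ^+ r = A * \sum_(r < N) z ^+ r +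
  B * \sum_(r < N) (w * z) ^+ r + B^* * \sum_(r < N) (w^-1 * z) ^+ r.
Proof.
rewrite !mulr_sumr -!big_split /=; apply: eq_bigr => r _.
rewrite /p /P !exprMn exprVn; ring.
Qed.

Lemma sum_q z : \sum_(r < N) q r * z ^+ r = A * \sum_(r < N) z ^+ r +
  B * \sum_(r < N) (w^-1 * z) ^+ r + B^* * \sum_(r < N) (w * z) ^+ r.
Proof.
rewrite !mulr_sumr -!big_split /=; apply: eq_bigr => r _.
rewrite /q /P invrK !exprMn exprVn; ring.
Qed.

Lemma rootM {x y : algC} : x ^+ N = 1 -> y ^+ N = 1 -> (x * y) ^+ N = 1.
Proof. by move=> hx hy; rewrite exprMn hx hy mulr1. Qed.
Lemma rootV {x : algC} : x ^+ N = 1 -> (x^-1) ^+ N = 1.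
Proof. by move=> hx; rewrite exprVn hx invr1. Qed.
Lemma geo0 {x : algC} : x ^+ N = 1 -> x != 1 -> \sum_(r < N) x ^+ r = 0.
Proof. by move=> hx hx1; rewrite geo_sum // (negbTE hx1). Qed.

Lemma inv_mul_eq1 (x y : algC) : x != 0 -> (x^-1 * y == 1) = (y == x).
Proof.
move=> hx; apply/eqP/eqP => [hh|->]; last by rewrite mulVf.
by rewrite -[y](mulVKf hx) hh mulr1.
Qed.

Lemma wpow_eq (i j : nat) : (i < N)%N -> (j < N)%N -> (w ^+ i == w ^+ j) = (i == j).
Proof. by move=> hi hj; rewrite (eq_prim_root_expr hprim) !modn_small. Qed.

Lemma dmod_a (i j : nat) : (i < N)%N -> (j < N)%N -> w ^+ j == w ^+ i -> dmod N i j = 0%N.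
Proof.
move=> hi hj; rewrite wpow_eq // => /eqP ->.
by rewrite /dmod addKn modnn.
Qed.

Lemma dmod_b (i j : nat) : (i < N)%N -> (j < N)%N -> w ^+ j.+1 == w ^+ i -> dmod N i j = (N - 1)%N.
Proof.
move=> hi hj; rewrite (eq_prim_root_expr hprim) (modn_small hi) /dmod.
case: (ltngtP j.+1 N) => [lt|gt|eq].
- rewrite modn_small // => /eqP <-.
  have -> : (j + N - j.+1 = N - 1)%N by move: lt; clear; lia.
  by rewrite modn_small //; move: hN; clear; lia.
- by move: gt; rewrite ltnS leqNgt hj.
- rewrite eq modnn => /eqP <-.
  rewrite subn0 -{2}(add0n N) modnDr modn_small //.
  by move: eq; clear; lia.
Qed.

Lemma dmod_c (i j : nat) : (i < N)%N -> (j < N)%N -> w ^+ j == w ^+ i.+1 -> dmod N i j = 1%N.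
Proof.
move=> hi hj; rewrite (eq_prim_root_expr hprim) (modn_small hj) /dmod.
case: (ltngtP i.+1 N) => [lt|gt|eq].
- rewrite (modn_small lt) => /eqP ->.
  have -> : (i.+1 + N - i = 1 + N)%N by move: lt; clear; lia.
  by rewrite modnDr modn_small //; move: hN; clear; lia.
- by move: gt; rewrite ltnS leqNgt hi.
- rewrite eq modnn => /eqP ->.
  have -> : (0 + N - i = 1)%N by move: eq; clear; lia.
  by rewrite modn_small //; move: hN; clear; lia.
Qed.

Lemma wpow_conj (i : nat) : (w ^+ i)^* = (w ^+ i)^-1.
Proof. exact: conj_root1 hN0 (wroot i). Qed.
Lemma conjM (x y : algC) : (x * y)^* = x^* * y^*. Proof. exact: rmorphM. Qed.
Lemma conjX (x : algC) n : (x ^+ n)^* = x^* ^+ n. Proof. exact: rmorphXn. Qed.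

Variable M : nat.
Hypothesis hM : M = (N + (N - 3))%N.

Lemma sumM (F : nat -> algC) :
  \sum_(r < M) F r = \sum_(r < N) F r + \sum_(m < N - 3) F (N + m)%N.
Proof. by rewrite hM big_split_ord. Qed.

Definition ev (j r : nat) : algC := if (r < N)%N then (w ^+ j) ^+ r * al r else 0.
Definition ew (j r : nat) : algC :=
  if (r < N)%N then (w ^+ j) ^+ r * be r else (w ^+ j) ^+ (r - N + 2) * ga (r - N + 2).
Definition Wv : 'M[algC]_(M, N) := \matrix_(r < M, j < N) ev j r.
Definition Ww : 'M[algC]_(M, N) := \matrix_(r < M, j < N) ew j r.

Definition zz (i j : nat) := (w ^+ i)^-1 * w ^+ j.

Lemma cdot_vv (i j : 'I_N) : cdot (col i Wv) (col j Wv) =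
  \sum_(r < N) p r * (zz i j) ^+ r.
Proof.
rewrite /cdot; under eq_bigr => r _ do rewrite !mxE.
rewrite (sumM (fun r => (ev i r)^* * ev j r)) /=.
rewrite [X in _ + X]big1 ?addr0; last by move=> m _; rewrite /ev ltnNge leq_addr /= mulr0.
apply: eq_bigr => r _; rewrite /ev ltn_ord conjM conjX al_conj wpow_conj.
by rewrite /zz exprMn -al_sq; ring.
Qed.

Lemma cdot_vw (i j : 'I_N) : cdot (col i Wv) (col j Ww) =
  P 1 * \sum_(r < N) (zz i j) ^+ r.
Proof.
rewrite /cdot; under eq_bigr => r _ do rewrite !mxE.
rewrite (sumM (fun r => (ev i r)^* * ew j r)) /=.
rewrite [X in _ + X]big1 ?addr0; last by move=> m _; rewrite /ev ltnNge leq_addr /= conjC0 mul0r.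
rewrite mulr_sumr; apply: eq_bigr => r _; rewrite /ev /ew ltn_ord conjM conjX al_conj wpow_conj.
by rewrite /zz exprMn -(albe r); ring.
Qed.

Lemma cdot_ww (i j : 'I_N) : cdot (col i Ww) (col j Ww) =
  \sum_(r < N) q r * (zz i j) ^+ r.
Proof.
rewrite /cdot; under eq_bigr => r _ do rewrite !mxE.
rewrite (sumM (fun r => (ew i r)^* * ew j r)) /=.
have e2 : \sum_(m < N - 3) (ew i (N + m))^* * ew j (N + m) =
          \sum_(r < N) h r * (zz i j) ^+ r.
  rewrite (@sum3 N (N - 3) (fun r => h r * (zz i j) ^+ r)).
  - apply: eq_bigr => m _; rewrite /ew ltnNge leq_addr /=.
    have -> : (N + m - N + 2 = m.+2)%N by clear; lia.
    have mN : (m.+2 < N)%N by move: (ltn_ord m) hN; clear; lia.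
    have [g2 gc] := ga_sq m.+2 mN.
    rewrite conjM conjX gc wpow_conj /zz exprMn -g2; ring.
  - by move: hN; clear; lia.
  - by rewrite h0 ?mul0r //; move: hN; clear; lia.
  - by rewrite h0 ?mul0r //; move: hN; clear; rewrite /mid; lia.
  - by rewrite h0 ?mul0r //; move: hN; clear; rewrite /mid; lia.
rewrite e2 -big_split /=; apply: eq_bigr => r _.
rewrite /ew ltn_ord conjM conjX be_conj wpow_conj /zz exprMn.
have -> : q r = be r ^+ 2 + h r by rewrite be_sq /h; ring.
ring.
Qed.


Lemma zz_facts (i j : 'I_N) : dmod N i j \notin [:: 0%N; 1%N; (N - 1)%N] ->
  [/\ zz i j != 1, w * zz i j != 1 & w^-1 * zz i j != 1].
Proof.
move=> hd; split.
- rewrite /zz inv_mul_eq1 ?wpow_inv //; apply: contra hd => e.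
  by rewrite (dmod_a _ _ (ltn_ord i) (ltn_ord j) e).
- have -> : w * zz i j = (w ^+ i)^-1 * w ^+ j.+1 by rewrite /zz exprS; ring.
  rewrite inv_mul_eq1 ?wpow_inv //; apply: contra hd => e.
  by rewrite (dmod_b _ _ (ltn_ord i) (ltn_ord j) e) !inE eqxx !orbT.
- have -> : w^-1 * zz i j = (w ^+ i.+1)^-1 * w ^+ j by rewrite /zz exprS invfM; ring.
  rewrite inv_mul_eq1 ?wpow_inv //; apply: contra hd => e.
  by rewrite (dmod_c _ _ (ltn_ord i) (ltn_ord j) e).
Qed.

Lemma zz_root (i j : nat) : zz i j ^+ N = 1.
Proof. exact: rootM (rootV (wroot i)) (wroot j). Qed.

Lemma orth_v (i j : 'I_N) : dmod N i j \notin [:: 0%N; 1%N; (N - 1)%N] ->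
  corth (col i Wv) (col j Wv).
Proof.
move=> /zz_facts [z1 z2 z3]; rewrite /corth cdot_vv sum_p.
have r0 := zz_root i j.
have r1 := rootM wN (zz_root i j).
have r2 := rootM (rootV wN) (zz_root i j).
by rewrite !geo0 // !mulr0 !addr0.
Qed.

Lemma orth_w (i j : 'I_N) : dmod N i j \notin [:: 0%N; 1%N; (N - 1)%N] ->
  corth (col i Ww) (col j Ww).
Proof.
move=> /zz_facts [z1 z2 z3]; rewrite /corth cdot_ww sum_q.
have r0 := zz_root i j.
have r1 := rootM wN (zz_root i j).
have r2 := rootM (rootV wN) (zz_root i j).
by rewrite !geo0 // !mulr0 !addr0.
Qed.

Lemma orth_vw (i j : 'I_N) : i != j -> corth (col i Wv) (col j Ww).
Proof.
move=> hij; rewrite /corth cdot_vw geo0 ?mulr0 ?zz_root //.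
rewrite /zz inv_mul_eq1 ?wpow_inv // wpow_eq //.
by rewrite eq_sym.
Qed.


Lemma quad3 (c0 c1 c2 z1 z2 z3 : algC) : z1 != z2 -> z1 != z3 -> z2 != z3 ->
  c2 + c0 * z1 + c1 * z1 ^+ 2 = 0 -> c2 + c0 * z2 + c1 * z2 ^+ 2 = 0 ->
  c2 + c0 * z3 + c1 * z3 ^+ 2 = 0 -> [/\ c0 = 0, c1 = 0 & c2 = 0].
Proof.
move=> d12 d13 d23 e1 e2 e3.
have f12 : c0 + c1 * (z1 + z2) = 0.
  have : (z1 - z2) * (c0 + c1 * (z1 + z2)) = 0.
    transitivity ((c2 + c0 * z1 + c1 * z1 ^+ 2) - (c2 + c0 * z2 + c1 * z2 ^+ 2)); first ring.
    by rewrite e1 e2 subrr.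
  by move/eqP; rewrite mulf_eq0 subr_eq0 (negbTE d12) => /eqP.
have f13 : c0 + c1 * (z1 + z3) = 0.
  have : (z1 - z3) * (c0 + c1 * (z1 + z3)) = 0.
    transitivity ((c2 + c0 * z1 + c1 * z1 ^+ 2) - (c2 + c0 * z3 + c1 * z3 ^+ 2)); first ring.
    by rewrite e1 e3 subrr.
  by move/eqP; rewrite mulf_eq0 subr_eq0 (negbTE d13) => /eqP.
have c10 : c1 = 0.
  have : c1 * (z2 - z3) = 0.
    transitivity ((c0 + c1 * (z1 + z2)) - (c0 + c1 * (z1 + z3))); first ring.
    by rewrite f12 f13 subrr.
  by move/eqP; rewrite mulf_eq0 subr_eq0 (negbTE d23) orbF => /eqP.
have c00 : c0 = 0 by move: f12; rewrite c10 mul0r addr0.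
split=> //; by move: e1; rewrite c10 c00 !mul0r !addr0.
Qed.

Definition Fh (F : 'I_N -> algC) (m : nat) := \sum_(j < N) (w ^+ j) ^+ m * F j.

Lemma inv_four (F : 'I_N -> algC) (l : 'I_N) :
  \sum_(m < N) ((w ^+ l)^-1) ^+ m * Fh F m = N%:R * F l.
Proof.
rewrite /Fh.
under eq_bigr => m _ do rewrite mulr_sumr.
rewrite exchange_big /=.
have e : forall j : 'I_N, \sum_(m < N) (w ^+ l)^-1 ^+ m * ((w ^+ j) ^+ m * F j)
    = (\sum_(m < N) (zz l j) ^+ m) * F j.
  move=> j; rewrite mulr_suml; apply: eq_bigr => m _; rewrite /zz exprMn; ring.
under eq_bigr => j _ do rewrite e.
rewrite (bigD1 l) //= [X in _ + X]big1 ?addr0.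
  by rewrite geo_sum ?zz_root // /zz mulVf ?wpow_inv ?eqxx.
move=> j hj; rewrite geo0 ?mul0r ?zz_root //.
by rewrite /zz inv_mul_eq1 ?wpow_inv // wpow_eq.
Qed.

Lemma sum3' (H : nat -> algC) : (forall m, (m < N)%N -> mid m -> H m = 0) ->
  \sum_(m < N) H m = H 0%N + H 1%N + H N.-1.
Proof.
move=> hH.
have eN : N = (N - 3).+3 by move: hN; clear; lia.
rewrite -(big_mkord xpredT) {1}eN big_nat_recl // big_nat_recl // big_nat_recr //=.
rewrite big_nat_cond big1 ?add0r ?addrA.
  by congr (_ + H _); move: hN; clear; lia.
move=> i /andP[/andP[_ hi] _]; apply: hH; rewrite /mid; move: hi hN; clear; lia.
Qed.

Definition nu := P 1 / P w.

Lemma nu_pos : 0 < nu. Proof. by rewrite divr_gt0 ?P1_pos // -(expr1 w) Pw_pos. Qed.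
Lemma Pw0 : P w != 0. Proof. by rewrite gt_eqF // -(expr1 w) Pw_pos. Qed.
Lemma Pwi0 : P w^-1 != 0. Proof. by rewrite gt_eqF // -(expr1 w) Pwi_pos. Qed.
Lemma P10 : P 1 != 0. Proof. by rewrite gt_eqF // P1_pos. Qed.
Lemma nu_neq1 : nu != 1.
Proof.
apply: contra P_diff; rewrite /nu => /eqP h.
have e : P 1 = P w by rewrite -[P 1](divfK Pw0) h mul1r.
have := P_geo; rewrite -e expr2 => /(mulfI P10).
by move=> h2; rewrite h2 e.
Qed.
Lemma nu_inv : P 1 / P w^-1 = nu^-1.
Proof.
have e : P w^-1 = P 1 ^+ 2 / P w by rewrite -P_geo mulrC mulKf ?Pw0.
have h1 := P10; have h2 := Pw0.
rewrite /nu e; field; by rewrite h1 h2.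
Qed.

Definition nd (a : 'I_(N + N)) : algC :=
  match split a with inl j => nu * (w ^+ j)^-1 | inr j => (w ^+ j)^-1 end.

Lemma norm_wi (j : nat) : `|(w ^+ j)^-1| = 1.
Proof. by rewrite normrV ?unitfE ?wpow_inv // normrX nw expr1n invr1. Qed.

Lemma nd_inj (a b : 'I_(N + N)) : a != b -> nd a != nd b.
Proof.
move=> hab; apply: contra hab; rewrite /nd.
have nu0 : nu != 0 by rewrite gt_eqF ?nu_pos.
case: (split_ordP a) => ja -> ; case: (split_ordP b) => jb ->.
- move/eqP/(mulfI nu0)/eqP; rewrite (inj_eq invr_inj) wpow_eq // => hj.
- Show.
- move=> /eqP /(congr1 (fun x => `|x|)); rewrite normrM !norm_wi mulr1.
  by rewrite gtr0_norm ?nu_pos // => /eqP; rewrite (negbTE nu_neq1).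
- move=> e; have {e} := congr1 (fun x : algC => `|x|) (eqP e) => /=.
  rewrite normrM !norm_wi mulr1 gtr0_norm ?nu_pos // => e.
  by move: nu_neq1; rewrite -e eqxx.
- rewrite (inj_eq invr_inj) wpow_eq // => hj.
  by apply/eqP; congr rshift; apply/val_inj/eqP.
Qed.


Lemma rootpred (v : algC) : v ^+ N = 1 -> v != 0 -> v ^+ N.-1 = v^-1.
Proof.
move=> hv v0; apply: (mulIf v0); rewrite mulVf // -exprSr prednK //; exact: hN0.
Qed.

Lemma ga_neq0 m : (m < N)%N -> mid m -> ga m != 0.
Proof. by move=> hm hmid; rewrite gt_eqF // sqrtC_gt0 h_pos. Qed.

Lemma NR0 : (N%:R : algC) != 0. Proof. by rewrite pnatr_eq0 -lt0n hN0. Qed.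

Lemma ker_zero (x : 'I_(N + N) -> algC) :
  (forall r : 'I_M, \sum_(a < N + N) row_mx Wv Ww r a * x a = 0) ->
  forall a1 a2 a3, a1 != a2 -> a1 != a3 -> a2 != a3 ->
  x a1 = 0 -> x a2 = 0 -> x a3 = 0 -> forall a, x a = 0.
Proof.
move=> H a1 a2 a3 d12 d13 d23 x1 x2 x3.
pose X := fun j : 'I_N => x (lshift N j).
pose Y := fun j : 'I_N => x (rshift N j).
have eqr : forall r : nat, (r < M)%N ->
    \sum_(j < N) ev j r * X j + \sum_(j < N) ew j r * Y j = 0.
  move=> r hr.
  transitivity (\sum_(a < N + N) row_mx Wv Ww (Ordinal hr) a * x a); last exact: H.
  rewrite big_split_ord; congr (_ + _); apply: eq_bigr => j _.
    by rewrite row_mxEl mxE.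
  by rewrite row_mxEr mxE.
have eqS : forall r : nat, (r < N)%N -> al r * Fh X r + be r * Fh Y r = 0.
  move=> r hr; have hrM : (r < M)%N by rewrite hM; move: hr; clear; lia.
  rewrite -(eqr r hrM) /Fh !mulr_sumr; congr (_ + _); apply: eq_bigr => j _;
    rewrite /ev /ew hr; ring.
have Ymid : forall m, (m < N)%N -> mid m -> Fh Y m = 0.
  move=> m hm hmid.
  have hrM : (N + m - 2 < M)%N by rewrite hM; move: hm hmid; rewrite /mid; clear; lia.
  have := eqr _ hrM.
  have hge : (N + m - 2 < N)%N = false by move: hmid; rewrite /mid; clear; lia.
  have hidx : (N + m - 2 - N + 2 = m)%N by move: hmid; rewrite /mid; clear; lia.
  rewrite /ev /ew hge hidx big1 ?add0r; last by move=> j _; rewrite mul0r.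
  have -> : \sum_(j < N) (w ^+ j) ^+ m * ga m * Y j = ga m * Fh Y m.
    by rewrite /Fh mulr_sumr; apply: eq_bigr => j _; ring.
  by move/eqP; rewrite mulf_eq0 (negbTE (ga_neq0 m hm hmid)) => /eqP.
have XS : forall m, (m < N)%N -> Fh X m = - (P 1 / p m) * Fh Y m.
  move=> m hm; have e := eqS m hm.
  have a0 := al_neq0 m.
  apply: (mulfI a0); rewrite -[LHS]subr0 -e -al_sq /be; field; exact: a0.
have Xmid : forall m, (m < N)%N -> mid m -> Fh X m = 0.
  by move=> m hm hmid; rewrite XS // Ymid // mulr0.
have inv : forall (F : 'I_N -> algC) (l : 'I_N),
    (forall m, (m < N)%N -> mid m -> Fh F m = 0) ->
    N%:R * F l = Fh F 0 + (w ^+ l)^-1 * Fh F 1 + w ^+ l * Fh F N.-1.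
  move=> F l hF; rewrite -inv_four (sum3' (fun m => ((w ^+ l)^-1) ^+ m * Fh F m)); last first.
    by move=> m hm hmid; rewrite hF ?mulr0.
  rewrite expr0 mul1r expr1 rootpred ?invrK //.
    exact: rootV (wroot l).
  by rewrite invr_eq0 wpow_inv.
set c0 := Fh Y 0; set c1 := Fh Y 1; set c2 := Fh Y N.-1.
have p0 : p 0 = P 1 by rewrite /p expr0.
have p1 : p 1 = P w by rewrite /p expr1.
have pN : p N.-1 = P w^-1 by rewrite /p rootpred ?wN ?w0.
have hN1 : (N.-1 < N)%N by move: hN; clear; lia.
have h1N : (1 < N)%N by move: hN; clear; lia.
have h0N := hN0.
have hnode : forall a, x a = 0 -> c2 + c0 * nd a + c1 * nd a ^+ 2 = 0.
  move=> a; rewrite /nd; case: (split_ordP a) => l -> xa.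
  - have := inv X l Xmid; rewrite [X l]xa mulr0 !XS // p0 p1 pN.
    rewrite nu_inv -/nu divff ?P10 // -/c0 -/c1 -/c2 => e.
    have wl0 := wpow_inv l.
    have nu0 : nu != 0 by rewrite gt_eqF ?nu_pos.
    have e2 : c2 + c0 * (nu * (w ^+ l)^-1) + c1 * (nu * (w ^+ l)^-1) ^+ 2 =
      - (nu * (w ^+ l)^-1) * (-1 * c0 + (w ^+ l)^-1 * (- nu * c1) + w ^+ l * (- nu^-1 * c2)).
      by field; rewrite nu0 wl0.
    by rewrite e2 -e mulr0.
  - have yl : Y l = 0 := xa.
    have := inv Y l Ymid; rewrite yl mulr0 -/c0 -/c1 -/c2 => e.
    have wl0 := wpow_inv l.
    have e2 : c2 + c0 * (w ^+ l)^-1 + c1 * (w ^+ l)^-1 ^+ 2 =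
      (w ^+ l)^-1 * (c0 + (w ^+ l)^-1 * c1 + w ^+ l * c2) by field.
    by rewrite e2 -e mulr0.
have [c00 c10 c20] := @quad3 c0 c1 c2 _ _ _ (nd_inj _ _ d12) (nd_inj _ _ d13) (nd_inj _ _ d23)
  (hnode _ x1) (hnode _ x2) (hnode _ x3).
move=> a; case: (split_ordP a) => l ->.
- have := inv X l Xmid; rewrite !XS // -/c0 -/c1 -/c2 c00 c10 c20 !(mulr0, mul0r, oppr0, addr0, add0r).
  by move/eqP; rewrite mulf_eq0 (negbTE NR0) => /eqP.
- have := inv Y l Ymid; rewrite -/c0 -/c1 -/c2 c00 c10 c20 !(mulr0, mul0r, oppr0, addr0, add0r).
  by move/eqP; rewrite mulf_eq0 (negbTE NR0) => /eqP.
Qed.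


Lemma det_nz (f : 'I_M -> 'I_(N + N)) : injective f ->
  \det (colsub f (row_mx Wv Ww)) != 0.
Proof.
move=> finj; rewrite -det_tr; apply/negP => /det0P [v vn0 hv].
pose x := fun a : 'I_(N + N) => \sum_(i | f i == a) v 0 i.
have xf : forall i, x (f i) = v 0 i.
  move=> i; rewrite /x (eq_bigl (pred1 i)) ?big_pred1_eq // => i' /=.
  exact: (inj_eq finj).
have hker : forall r : 'I_M, \sum_(a < N + N) row_mx Wv Ww r a * x a = 0.
  move=> r; transitivity ((v *m (colsub f (row_mx Wv Ww))^T) 0 r); last by rewrite hv mxE.
  rewrite mxE; under [RHS]eq_bigr => i _ do rewrite !mxE.
  rewrite /x (eq_bigr (fun a => \sum_(i < M) if f i == a then row_mx Wv Ww r a * v 0 i else 0)); last first.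
    by move=> a _; rewrite mulr_sumr big_mkcond.
  rewrite exchange_big; apply: eq_bigr => i _ /=.
  rewrite (bigD1 (f i)) //= eqxx big1 ?addr0.
    by rewrite mulrC mxE.
  by move=> a hne; rewrite eq_sym (negbTE hne).
have x0 : forall b, b \notin codom f -> x b = 0.
  move=> b hb; rewrite /x big_pred0 // => i; apply/negbTE; apply: contra hb => /eqP <-.
  exact: codom_f.
have hc : #|[predC [in codom f]]| = 3%N.
  have := cardC [in codom f]; rewrite card_codom // card_ord card_ord.
  move=> h; apply/eqP; rewrite -(eqn_add2l M) h; apply/eqP; move: hN hM; clear; lia.
have hs : size (enum [predC [in codom f]]) = 3%N by rewrite -cardE hc.
have hu := enum_uniq [predC [in codom f]].
have hm := mem_enum [predC [in codom f]].
move: (enum _) hs hu hm => sq.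
case: sq => [|b1 [|b2 [|b3 [|]]]] //= _.
rewrite !inE !negb_or -!andbA => /and4P[d12 d13 d23 _] hm.
have hb : forall b, b \in [:: b1; b2; b3] -> x b = 0.
  by move=> b; rewrite hm inE /= => /x0.
have hb1 : x b1 = 0 by apply: hb; rewrite !inE eqxx.
have hb2 : x b2 = 0 by apply: hb; rewrite !inE eqxx ?orbT.
have hb3 : x b3 = 0 by apply: hb; rewrite !inE eqxx ?orbT.
have hz := ker_zero x hker b1 b2 b3 d12 d13 d23 hb1 hb2 hb3.
move/eqP: vn0; apply; apply/rowP => i; rewrite mxE -xf hz //.
Qed.

End Params.

End L3.

Theorem lemma3 (k : nat) (hk : (1 <= k)%N) :
  exists Wv Ww : 'M[algC]_(4 * k + 1, 2 * k + 2),
    [/\ (forall i j : 'I_(2 * k + 2),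
           dmod (2 * k + 2) i j \notin [:: 0%N; 1%N; (2 * k + 1)%N] ->
           corth (col i Wv) (col j Wv)),
        (forall i j : 'I_(2 * k + 2),
           dmod (2 * k + 2) i j \notin [:: 0%N; 1%N; (2 * k + 1)%N] ->
           corth (col i Ww) (col j Ww)),
        (forall i j : 'I_(2 * k + 2), i != j -> corth (col i Wv) (col j Ww))
      & (forall f : 'I_(4 * k + 1) -> 'I_(2 * k + 2 + (2 * k + 2)),
           injective f -> \det (colsub f (row_mx Wv Ww)) != 0)].
Proof.
have hN : (3 < 2 * k + 2)%N by move: hk; clear; lia.
have hN2 : (2 < 2 * k + 2)%N by move: hk; clear; lia.
have hM : (4 * k + 1 = (2 * k + 2) + ((2 * k + 2) - 3))%N by move: hk; clear; lia.
have e1 : (2 * k + 1 = (2 * k + 2) - 1)%N by clear; lia.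
have [w [hprim hRe]] := L3.exists_omega _ hN2.
exists (L3.Wv (2 * k + 2) w (4 * k + 1)), (L3.Ww (2 * k + 2) w (4 * k + 1)).
split.
- by move=> i j; rewrite e1; apply: (L3.orth_v _ hN _ hprim _ hM).
- by move=> i j; rewrite e1; apply: (L3.orth_w _ hN _ hprim hRe _ hM).
- by move=> i j; apply: (L3.orth_vw _ hN _ hprim _ hM).
- by move=> f finj; apply: (L3.det_nz _ hN _ hprim hRe _ hM).
Qed.
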